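(* In the two-type setting, suppose $\phi_1\sigma>1$. Then for every $M>0$ there is $\bar k\in\mathbb N$ such that for every $q^0_2\in[0,\bar p_2]$ there is $0\le k\le\bar k$ with $$\prod_{j=0}^{k-1}\phi_1\psi(\beta_2q^j_2)>M,$$ where $q^j_2$ is the second coordinate of $h^j(0,q^0_2)$.
   Context: Two-type limiting map: $\beta_1,\beta_2>0$, $\alpha(1),\alpha(2)\in[0,1)$, $\phi_i=(1-\alpha(i))\beta_i$. For $p\in[0,1]^2$, $S(p)=\beta_1p_1+\beta_2p_2$ and $f^{(i)}(p)=(1-e^{-S(p)})\beta_ip_i/S(p)$ ($=0$ if $S(p)=0$). For $\alpha\in(0,1)$ let $g_\alpha(x)=\frac{(1-\sqrt{1-4(1-\alpha)x(1-x)})^3}{8(1-\alpha)^2x^2}$ for $x\in(0,1]$ and $g_\alpha(0)=0$; let $g_0(x)=x$ for $x\le1/2$ and $g_0(x)=(1-x)^3/x^2$ for $x>1/2$. $h(p)=(h_1(p),h_2(p))$ with $h_i(p)=g_{\alpha(i)}(f^{(i)}(p))$; note $h(0,x)=(0,g_{\alpha(2)}(1-e^{-\beta_2x}))$. $\bar p_i=\sup_{x\in[0,1]}g_{\alpha(i)}(x)$. $\psi(x)=(1-e^{-x})/x$, $\psi(0)=1$. For $x\in[0,1]$ let $\Psi_n(x)=\big(\prod_{k=0}^{n-1}\psi(\beta_2h^k_2(0,x))\big)^{1/n}$, $\underline\Psi(x)=\liminf_{n\to\infty}\Psi_n(x)$, and $\sigma=\inf_{x\in[0,\bar p_2]}\underline\Psi(x)$.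 *)

(* Defs.v *)
From Stdlib Require Import Reals Lra.
Open Scope R_scope.

Definition galpha (a x : R) : R :=
  if Req_EM_T a 0 then
    (if Rle_dec x (1/2) then x else (1 - x) ^ 3 / x ^ 2)
  else
    (if Req_EM_T x 0 then 0
     else (1 - sqrt (1 - 4 * (1 - a) * x * (1 - x))) ^ 3
          / (8 * (1 - a) ^ 2 * x ^ 2)).

Definition Ssum (b1 b2 : R) (p : R * R) : R := b1 * fst p + b2 * snd p.

Definition fmap (b1 b2 bi pi : R) (p : R * R) : R :=
  let s := Ssum b1 b2 p in
  if Req_EM_T s 0 then 0 else (1 - exp (- s)) * bi * pi / s.

Definition hmap (b1 b2 a1 a2 : R) (p : R * R) : R * R :=
  (galpha a1 (fmap b1 b2 b1 (fst p) p), galpha a2 (fmap b1 b2 b2 (snd p) p)).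

Fixpoint hiter (b1 b2 a1 a2 : R) (k : nat) (p : R * R) : R * R :=
  match k with
  | O => p
  | S k' => hmap b1 b2 a1 a2 (hiter b1 b2 a1 a2 k' p)
  end.

Definition psi (x : R) : R :=
  if Req_EM_T x 0 then 1 else (1 - exp (- x)) / x.

Fixpoint prodR (u : nat -> R) (n : nat) : R :=
  match n with
  | O => 1
  | S n' => prodR u n' * u n'
  end.

Definition PsiN (b1 b2 a1 a2 : R) (x : R) (n : nat) : R :=
  Rpower (prodR (fun k => psi (b2 * snd (hiter b1 b2 a1 a2 k (0, x)))) n)
         (1 / INR n).

Definition is_liminf (u : nat -> R) (L : R) : Prop :=
  (forall eps, eps > 0 -> exists N, forall n, (n >= N)%nat -> u n > L - eps) /\
  (forall eps, eps > 0 -> forall N, exists n, (n >= N)%nat /\ u n < L + eps).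

Definition is_inf (E : R -> Prop) (s : R) : Prop :=
  (forall y, E y -> s <= y) /\ (forall b, (forall y, E y -> b <= y) -> b <= s).

(* Main.v *)
Require Import Defs.
From Stdlib Require Import Reals Lra Lia Classical ClassicalEpsilon.
From Coquelicot Require Import Coquelicot.
Open Scope R_scope.

Definition cont (f : R -> R) x := forall eps, 0 < eps ->
  exists d, 0 < d /\ forall y, Rabs (y - x) < d -> Rabs (f y - f x) < eps.

Lemma cpt_cont f x : continuity_pt f x -> cont f x.
Proof.
  intros H eps He. destruct (H eps He) as [d [Hd Hy]]. exists d; split; auto.
  intros y Hyx. destruct (Req_dec y x) as [->|Hne].
  - rewrite Rminus_eq_0, Rabs_R0; auto.
  - apply (Hy y). split. split; auto. exact I. simpl. unfold R_dist. auto.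
Qed.

Lemma cont_cpt f x : cont f x -> continuity_pt f x.
Proof.
  intros H eps He. destruct (H eps He) as [d [Hd Hy]]. exists d; split; auto.
  intros y [_ Hyx]. apply Hy. exact Hyx.
Qed.

Lemma der_cont f x : ex_derive f x -> cont f x.
Proof.
  intros H. apply cpt_cont. apply continuity_pt_filterlim.
  apply (ex_derive_continuous f x H).
Qed.

Lemma cont_ext_loc f g x d : 0 < d -> (forall y, Rabs (y - x) < d -> g y = f y) ->
  cont f x -> cont g x.
Proof.
  intros Hd Hfg H eps He. destruct (H eps He) as [d' [Hd' Hy]].
  exists (Rmin d d'). split. apply Rmin_glb_lt; auto.
  intros y Hyx. rewrite (Hfg y), (Hfg x).
  - apply Hy. eapply Rlt_le_trans; [exact Hyx| apply Rmin_r].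
  - rewrite Rminus_eq_0, Rabs_R0; auto.
  - eapply Rlt_le_trans; [exact Hyx| apply Rmin_l].
Qed.

Lemma cont_comp f g x : cont f x -> cont g (f x) -> cont (fun y => g (f y)) x.
Proof.
  intros Hf Hg eps He. destruct (Hg eps He) as [d [Hd Hy]].
  destruct (Hf d Hd) as [d' [Hd' Hy']]. exists d'; split; auto.
Qed.

Lemma cont_mult f g x : cont f x -> cont g x -> cont (fun y => f y * g y) x.
Proof.
  intros Hf Hg. apply cpt_cont. apply (continuity_pt_mult f g x); apply cont_cpt; auto.
Qed.

Lemma cont_const c x : cont (fun _ => c) x.
Proof. intros eps He. exists 1. split. lra. intros. rewrite Rminus_eq_0, Rabs_R0; auto. Qed.

Lemma cont_two f1 f2 g x : cont f1 x -> cont f2 x -> f1 x = g x -> f2 x = g x ->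
  (forall y, g y = f1 y \/ g y = f2 y) -> cont g x.
Proof.
  intros H1 H2 E1 E2 Hg eps He.
  destruct (H1 eps He) as [d1 [Hd1 Hy1]]. destruct (H2 eps He) as [d2 [Hd2 Hy2]].
  exists (Rmin d1 d2). split. apply Rmin_glb_lt; auto.
  intros y Hyx. destruct (Hg y) as [-> | ->].
  - rewrite <- E1. apply Hy1. eapply Rlt_le_trans; [exact Hyx| apply Rmin_l].
  - rewrite <- E2. apply Hy2. eapply Rlt_le_trans; [exact Hyx| apply Rmin_r].
Qed.

Lemma psi_cont x : cont psi x.
Proof.
  destruct (Req_dec x 0) as [->|Hx].
  - intros eps He. destruct (derivable_pt_lim_exp 0 eps He) as [d Hd].
    exists d. split. apply cond_pos. intros y Hy.
    unfold psi at 2. destruct (Req_EM_T 0 0) as [_|C]; [|lra].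
    unfold psi. destruct (Req_EM_T y 0) as [->|Hy0].
    + rewrite Rminus_eq_0, Rabs_R0; auto.
    + rewrite Rminus_0_r in Hy.
      assert (Hm : -y <> 0) by lra.
      assert (Ha : Rabs (-y) < d) by (rewrite Rabs_Ropp; auto).
      specialize (Hd (-y) Hm Ha). rewrite exp_0, Rplus_0_l in Hd.
      replace ((1 - exp (- y)) / y - 1) with ((exp (- y) - 1) / - y - 1); auto.
      field. auto.
  - apply (cont_ext_loc (fun y => (1 - exp (- y)) / y) _ _ (Rabs x)).
    + apply Rabs_pos_lt; auto.
    + intros y Hy. unfold psi. destruct (Req_EM_T y 0) as [->|]; auto.
      rewrite Rminus_0_l, Rabs_Ropp in Hy. lra.
    + apply der_cont. auto_derive. auto.
Qed.

Lemma galpha0_eq y : galpha 0 y = if Rle_dec y (1/2) then y else (1 - y) ^ 3 / y ^ 2.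
Proof. unfold galpha. destruct (Req_EM_T 0 0); [auto|lra]. Qed.

Lemma galphaa_eq a y : a <> 0 -> galpha a y = if Req_EM_T y 0 then 0 else
  (1 - sqrt (1 - 4 * (1 - a) * y * (1 - y))) ^ 3 / (8 * (1 - a) ^ 2 * y ^ 2).
Proof. intros. unfold galpha. destruct (Req_EM_T a 0); [lra|auto]. Qed.

Lemma galpha_at0 a : galpha a 0 = 0.
Proof. unfold galpha. destruct (Req_EM_T a 0). destruct (Rle_dec 0 (1/2)); lra.
 destruct (Req_EM_T 0 0); lra. Qed.

Lemma galpha_cont a x : 0 <= a < 1 -> cont (galpha a) x.
Proof.
  intros Ha. destruct (Req_dec a 0) as [->|Ha0].
  - destruct (Rlt_le_dec x (1/2)) as [Hx|Hx].
    + apply (cont_ext_loc (fun y => y) _ _ (1/2 - x)). lra.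
      intros y Hy. rewrite galpha0_eq. destruct (Rle_dec y (1/2)); auto.
      apply Rabs_def2 in Hy. lra.
      apply der_cont. auto_derive. auto.
    + destruct (Req_dec x (1/2)) as [->|Hx2].
      * apply (cont_two (fun y => y) (fun y => (1 - y) ^ 3 / y ^ 2)).
        apply der_cont. auto_derive. auto.
        apply der_cont. auto_derive. lra.
        rewrite galpha0_eq. destruct (Rle_dec (1/2) (1/2)); lra.
        rewrite galpha0_eq. destruct (Rle_dec (1/2) (1/2)); [field|lra].
        intros y. rewrite galpha0_eq. destruct (Rle_dec y (1/2)); auto.
      * apply (cont_ext_loc (fun y => (1 - y) ^ 3 / y ^ 2) _ _ (x - 1/2)). lra.
        intros y Hy. rewrite galpha0_eq. destruct (Rle_dec y (1/2)); auto.
        apply Rabs_def2 in Hy. lra.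
        apply der_cont. auto_derive. repeat split; intro; nra.
  - assert (Hapos : 0 < a) by (destruct Ha as [[H|H] _]; [auto|congruence]).
    destruct (Req_dec x 0) as [->|Hx].
    + intros eps He. exists (Rmin 1 (eps / 64)). split.
      apply Rmin_glb_lt; lra.
      intros y Hy. rewrite Rminus_0_r in Hy.
      assert (Hy1 : Rabs y < 1) by (eapply Rlt_le_trans; [exact Hy|apply Rmin_l]).
      assert (Hye : Rabs y < eps/64) by (eapply Rlt_le_trans; [exact Hy|apply Rmin_r]).
      rewrite galpha_at0, Rminus_0_r, galphaa_eq by auto.
      destruct (Req_EM_T y 0) as [->|Hy0]. rewrite Rabs_R0; lra.
      set (t := 4 * (1 - a) * y * (1 - y)).
      assert (Ht : 0 < 1 - t) by (unfold t; assert (0 <= (1-a)*((2*y-1)*(2*y-1))) by (apply Rmult_le_pos; [lra|apply Rle_0_sqr]); assert (1 - 4*(1-a)*y*(1-y) = (1-a)*((2*y-1)*(2*y-1)) + a) by ring; lra).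
      set (s := sqrt (1 - t)).
      assert (Hs2 : s * s = 1 - t) by (apply sqrt_sqrt; lra).
      assert (Hs0 : 0 <= s) by apply sqrt_pos.
      assert (Hay : 0 < Rabs y) by (apply Rabs_pos_lt; auto).
      assert (H1y : Rabs (1 - y) <= 2) by (apply Rabs_def2 in Hy1; apply Rabs_le; lra).
      assert (Hta : Rabs t = 4 * (1 - a) * Rabs y * Rabs (1 - y)).
      { unfold t. rewrite !Rabs_mult. rewrite (Rabs_right 4) by lra.
        rewrite (Rabs_right (1 - a)) by lra. auto. }
      assert (Hst : Rabs (1 - s) <= Rabs t).
      { assert (E : (1 - s) * (1 + s) = t) by nra.
        rewrite <- E, Rabs_mult. rewrite (Rabs_right (1 + s)) by lra.
        assert (0 <= Rabs (1 - s)) by apply Rabs_pos. nra. }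
      assert (Hb : Rabs (1 - s) <= 8 * (1 - a) * Rabs y).
      { rewrite Hta in Hst. assert (0 <= Rabs (1-y)) by apply Rabs_pos.
        assert (0 <= (1-a) * Rabs y) by nra. nra. }
      rewrite Rabs_div, <- !RPow_abs.
      2:{ apply Rmult_integral_contrapositive; split. nra. apply pow_nonzero; auto. }
      rewrite Rabs_mult, (Rabs_right (8 * (1 - a) ^ 2)) by (apply Rle_ge; nra).
      apply Rle_lt_trans with (64 * (1 - a) * Rabs y); [|nra].
      assert (Hd : 0 < 8 * (1 - a) ^ 2 * Rabs y ^ 2) by (apply Rmult_lt_0_compat; [nra| apply pow_lt; auto]).
      apply (Rmult_le_reg_r (8 * (1 - a) ^ 2 * Rabs y ^ 2)); auto.
      rewrite <- RPow_abs. unfold Rdiv. rewrite Rmult_assoc. rewrite Rinv_l by lra. rewrite Rmult_1_r.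
      assert (0 <= Rabs (1 - s)) by apply Rabs_pos.
      replace (64 * (1 - a) * Rabs y * (8 * (1 - a) ^ 2 * Rabs y ^ 2))
        with ((8 * (1 - a) * Rabs y) ^ 3) by ring.
      apply pow_incr. lra.
    + apply (cont_ext_loc (fun y => (1 - sqrt (1 - 4 * (1 - a) * y * (1 - y))) ^ 3
                                   / (8 * (1 - a) ^ 2 * y ^ 2)) _ _ (Rabs x)).
      apply Rabs_pos_lt; auto.
      intros y Hy. rewrite galphaa_eq by auto. destruct (Req_EM_T y 0) as [->|]; auto.
      rewrite Rminus_0_l, Rabs_Ropp in Hy. lra.
      apply der_cont. auto_derive. repeat split; try (assert (0 <= (1-a)*((2*x-1)*(2*x-1))) by (apply Rmult_le_pos; [lra|apply Rle_0_sqr]); assert (1 - 4*(1-a)*x*(1-x) = (1-a)*((2*x-1)*(2*x-1)) + a) by ring; lra).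
      apply Rmult_integral_contrapositive; split. nra. apply Rmult_integral_contrapositive; split; auto.
Qed.

Fixpoint iterG (b2 a2 : R) (j : nat) (x : R) : R :=
  match j with O => x | S j' => galpha a2 (1 - exp (- (b2 * iterG b2 a2 j' x))) end.

Lemma hmap0 b1 b2 a1 a2 z : hmap b1 b2 a1 a2 (0, z) = (0, galpha a2 (1 - exp (- (b2 * z)))).
Proof.
  unfold hmap, fmap, Ssum; simpl fst; simpl snd.
  destruct (Req_EM_T (b1 * 0 + b2 * z) 0) as [E|E].
  - rewrite galpha_at0. f_equal. f_equal. replace (b2 * z) with 0 by lra.
    rewrite Ropp_0, exp_0. ring.
  - rewrite Rmult_0_r, Rmult_0_r, Rdiv_0_l, galpha_at0. f_equal. f_equal.
    rewrite Rmult_0_r, Rplus_0_l in *. field. auto. split; intro; subst; apply E; ring.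
Qed.

Lemma hiter_eq b1 b2 a1 a2 j x : hiter b1 b2 a1 a2 j (0, x) = (0, iterG b2 a2 j x).
Proof. induction j; simpl; auto. rewrite IHj. apply hmap0. Qed.

Lemma iterG_cont b2 a2 j x : 0 <= a2 < 1 -> cont (iterG b2 a2 j) x.
Proof.
  intros Ha. induction j; simpl.
  - apply der_cont. auto_derive. auto.
  - apply (cont_comp (iterG b2 a2 j) (fun z => galpha a2 (1 - exp (- (b2 * z))))); auto.
    apply (cont_comp (fun z => 1 - exp (- (b2 * z))) (galpha a2)).
    apply der_cont. auto_derive. auto. apply galpha_cont; auto.
Qed.

Lemma prodR_ext u v n : (forall j, u j = v j) -> prodR u n = prodR v n.
Proof. intros H; induction n; simpl; auto. rewrite IHn, H; auto. Qed.

Lemma prod_cont (F : nat -> R -> R) k x : (forall j, cont (F j) x) ->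
  cont (fun y => prodR (fun j => F j y) k) x.
Proof.
  intros H. induction k; simpl. apply cont_const.
  apply (cont_mult (fun y => prodR (fun j => F j y) k) (F k)); auto.
Qed.

Lemma psi_pos y : 0 < psi y.
Proof.
  unfold psi. destruct (Req_EM_T y 0). lra.
  destruct (Rlt_or_le 0 y) as [H|H].
  - assert (exp (- y) < 1) by (rewrite <- exp_0; apply exp_increasing; lra).
    apply Rdiv_lt_0_compat; lra.
  - assert (1 < exp (- y)) by (rewrite <- exp_0; apply exp_increasing; lra).
    assert (y < 0) by lra.
    replace ((1 - exp (- y)) / y) with ((exp (- y) - 1) / (- y)) by (field; auto).
    apply Rdiv_lt_0_compat; lra.
Qed.

Lemma prodR_pos w n : (forall j, 0 < w j) -> 0 < prodR w n.
Proof. intros H; induction n; simpl. lra. apply Rmult_lt_0_compat; auto. Qed.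

Lemma prodR_scale c w n : prodR (fun j => c * w j) n = c ^ n * prodR w n.
Proof. induction n; simpl. ring. rewrite IHn. ring. Qed.

Lemma rpow_inv A n : 0 < A -> (n >= 1)%nat -> (Rpower A (1 / INR n)) ^ n = A.
Proof.
  intros HA Hn. rewrite <- Rpower_pow by (unfold Rpower; apply exp_pos).
  rewrite Rpower_mult. replace (1 / INR n * INR n) with 1. apply Rpower_1; auto.
  field. apply not_0_INR. lia.
Qed.

Section PW.
Variables (b1 b2 a1 a2 : R).
Hypotheses (Hb1 : 0 < b1) (Ha1 : 0 <= a1 < 1).

Let phi := (1 - a1) * b1.
Let w (x : R) (j : nat) := psi (b2 * snd (hiter b1 b2 a1 a2 j (0, x))).

Lemma phi_pos : 0 < phi.
Proof. unfold phi. apply Rmult_lt_0_compat; lra. Qed.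

Lemma key x n : (n >= 1)%nat ->
  prodR (fun j => phi * w x j) n = (phi * PsiN b1 b2 a1 a2 x n) ^ n.
Proof.
  intros Hn. rewrite prodR_scale, Rpow_mult_distr. f_equal. unfold PsiN.
  rewrite rpow_inv; auto. apply prodR_pos. intro; apply psi_pos.
Qed.

Lemma eventual x c M : 1 < c ->
  (exists N, forall n, (N <= n)%nat -> c < phi * PsiN b1 b2 a1 a2 x n) ->
  exists n, prodR (fun j => phi * w x j) n > M.
Proof.
  intros Hc [N HN]. destruct (INR_unbounded (M / (c - 1))) as [m Hm].
  set (n := (m + N + 1)%nat). exists n.
  rewrite key by (unfold n; lia).
  assert (Hle : INR m <= INR n) by (apply le_INR; unfold n; lia).
  assert (HMn : M < INR n * (c - 1)).
  { assert (M = M / (c - 1) * (c - 1)) by (field; lra). nra. }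
  assert (Hp := Rle_pow_lin (c - 1) n ltac:(lra)).
  replace (1 + (c - 1)) with c in Hp by ring.
  assert (c ^ n <= (phi * PsiN b1 b2 a1 a2 x n) ^ n).
  { apply pow_incr. split. lra. left. apply HN. unfold n; lia. }
  lra.
Qed.

Lemma pointwise pbar2 sigma x M
  (Hsigma : is_inf (fun y => exists x, 0 <= x <= pbar2 /\
                      is_liminf (PsiN b1 b2 a1 a2 x) y) sigma)
  (Hphi : phi * sigma > 1) (Hx : 0 <= x <= pbar2) :
  exists n, prodR (fun j => phi * w x j) n > M.
Proof.
  assert (Hph := phi_pos).
  set (u := PsiN b1 b2 a1 a2 x).
  destruct (ex_LimInf_seq u) as [l Hl]. destruct l as [r| |].
  - assert (HE : sigma <= r).
    { apply (proj1 Hsigma). exists x. split; auto. split.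
      - intros eps He. destruct (Hl (mkposreal eps He)) as [_ [N HN]]. exists N.
        intros n Hn. apply (HN n Hn).
      - intros eps He N. destruct (Hl (mkposreal eps He)) as [H _]. apply H. }
    assert (Hr : phi * r > 1) by nra.
    set (c := (phi * r + 1) / 2).
    assert (He : 0 < (phi * r - c) / phi) by (apply Rdiv_lt_0_compat; unfold c; lra).
    apply (eventual x c M). unfold c; lra.
    destruct (Hl (mkposreal _ He)) as [_ [N HN]]. exists N. intros n Hn.
    specialize (HN n Hn). simpl in HN.
    assert (E : phi * (r - (phi * r - c) / phi) = c) by (field; lra).
    fold u. nra.
  - apply (eventual x 2 M). lra.
    destruct (Hl (2 / phi)) as [N HN]. exists N. intros n Hn. specialize (HN n Hn).
    assert (E : phi * (2 / phi) = 2) by (field; lra). fold u. nra.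
  - exfalso. destruct (Hl 0 O) as [n [_ Hn]]. unfold u, PsiN, Rpower in Hn.
    assert (H := exp_pos (1 / INR n * ln (prodR (fun k => psi (b2 * snd (hiter b1 b2 a1 a2 k (0, x)))) n))).
    lra.
Qed.

End PW.

Theorem mainTheorem18
  (beta1 beta2 alpha1 alpha2 : R)
  (Hb1 : 0 < beta1) (Hb2 : 0 < beta2)
  (Ha1 : 0 <= alpha1 < 1) (Ha2 : 0 <= alpha2 < 1)
  (pbar2 sigma : R)
  (Hpbar2 : is_lub (fun y => exists x, 0 <= x <= 1 /\ y = galpha alpha2 x) pbar2)
  (Hsigma : is_inf (fun y => exists x, 0 <= x <= pbar2 /\
                      is_liminf (PsiN beta1 beta2 alpha1 alpha2 x) y) sigma)
  (Hphi : (1 - alpha1) * beta1 * sigma > 1) :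
  forall M : R, M > 0 ->
  exists kbar : nat, forall q0 : R, 0 <= q0 <= pbar2 ->
  exists k : nat, (k <= kbar)%nat /\
    prodR (fun j => (1 - alpha1) * beta1 *
                    psi (beta2 * snd (hiter beta1 beta2 alpha1 alpha2 j (0, q0)))) k > M.
Proof.
  intros M HM.
  set (P := fun k q => prodR (fun j => (1 - alpha1) * beta1 *
                    psi (beta2 * snd (hiter beta1 beta2 alpha1 alpha2 j (0, q)))) k).
  change (exists kbar : nat, forall q0 : R, 0 <= q0 <= pbar2 ->
    exists k : nat, (k <= kbar)%nat /\ P k q0 > M).
  apply NNPP. intro Hno.
  assert (Hseq : forall n : nat, exists q, 0 <= q <= pbar2 /\
             forall k, (k <= n)%nat -> P k q <= M).
  { intro n. apply NNPP; intro C. apply Hno. exists n. intros q0 Hq.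
    apply NNPP; intro C2. apply C. exists q0. split; auto. intros k Hk.
    apply Rnot_lt_le. intro. apply C2. exists k. auto. }
  set (u := fun n => proj1_sig (constructive_indefinite_description _ (Hseq n))).
  assert (Hu : forall n, 0 <= u n <= pbar2 /\ forall k, (k <= n)%nat -> P k (u n) <= M).
  { intro n. unfold u. destruct (constructive_indefinite_description _ (Hseq n)); auto. }
  destruct (Bolzano_Weierstrass u (fun c => 0 <= c <= pbar2) (compact_P3 0 pbar2)
              (fun n => proj1 (Hu n))) as [l Hl].
  assert (Hnb : forall d, 0 < d -> forall N, exists p, (N <= p)%nat /\ Rabs (u p - l) < d).
  { intros d Hd N. apply (Hl (disc l (mkposreal d Hd)) N). exists (mkposreal d Hd).
    intros y Hy; auto. }
  assert (Hlr : 0 <= l <= pbar2).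
  { split; apply Rnot_lt_le; intro Hc.
    - destruct (Hnb (- l) ltac:(lra) O) as [p [_ Hp]]. apply Rabs_def2 in Hp.
      destruct (Hu p) as [[H1 H2] _]. lra.
    - destruct (Hnb (l - pbar2) ltac:(lra) O) as [p [_ Hp]]. apply Rabs_def2 in Hp.
      destruct (Hu p) as [[H1 H2] _]. lra. }
  destruct (pointwise beta1 beta2 alpha1 alpha2 Hb1 Ha1 pbar2 sigma l M Hsigma Hphi Hlr)
    as [k Hk].
  fold (P k l) in Hk.
  assert (HPe : forall q, P k q = prodR (fun j => (1 - alpha1) * beta1 *
                    psi (beta2 * iterG beta2 alpha2 j q)) k).
  { intro q. unfold P. apply prodR_ext. intro j. rewrite hiter_eq. auto. }
  assert (Hc : cont (P k) l).
  { apply (cont_ext_loc (fun q => prodR (fun j => (1 - alpha1) * beta1 *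
                    psi (beta2 * iterG beta2 alpha2 j q)) k) _ _ 1). lra.
    intros; apply HPe.
    apply (prod_cont (fun j q => (1 - alpha1) * beta1 * psi (beta2 * iterG beta2 alpha2 j q))).
    intro j. apply (cont_mult (fun _ => (1 - alpha1) * beta1)). apply cont_const.
    apply (cont_comp (fun q => beta2 * iterG beta2 alpha2 j q) psi).
    apply (cont_mult (fun _ => beta2)). apply cont_const. apply iterG_cont; auto.
    apply psi_cont. }
  destruct (Hc (P k l - M) ltac:(lra)) as [d [Hd Hcd]].
  destruct (Hnb d Hd k) as [p [Hp Hpd]].
  specialize (Hcd _ Hpd). apply Rabs_def2 in Hcd.
  destruct (Hu p) as [_ H]. specialize (H k Hp). lra.
Qed.
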